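(* Let $\Delta$ be a group acting (without inversions) $k$-acylindrically, cocompactly and minimally on a tree $X$. Let $H$ be a finitely generated subgroup of $\Delta$, and suppose that $M<H$ is a non-trivial subgroup that is normal in $\Delta$. Then the action of $H$ on $X$ is cocompact.
   Context: An action on a tree is $k$-acylindrical if the stabilizer of every geodesic edge-path of length greater than $k$ is trivial. An action on a tree is minimal if there is no proper invariant subtree, and cocompact if the quotient graph is finite. *)

(* Defs.v *)
From Stdlib Require Import List.
Import ListNotations.
Set Implicit Arguments.

Definition is_group {G : Type} (mul : G -> G -> G) (inv : G -> G) (e : G) : Prop :=
  (forall a b c, mul a (mul b c) = mul (mul a b) c) /\
  (forall a, mul e a = a) /\ (forall a, mul a e = a) /\
  (forall a, mul (inv a) a = e) /\ (forall a, mul a (inv a) = e).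

Definition is_subgroup {G : Type} (mul : G -> G -> G) (inv : G -> G) (e : G)
  (H : G -> Prop) : Prop :=
  H e /\ (forall a b, H a -> H b -> H (mul a b)) /\ (forall a, H a -> H (inv a)).

Definition generated_by {G : Type} (mul : G -> G -> G) (inv : G -> G) (e : G)
  (S : list G) (x : G) : Prop :=
  forall K : G -> Prop, is_subgroup mul inv e K -> (forall s, In s S -> K s) -> K x.

Definition finitely_generated {G : Type} (mul : G -> G -> G) (inv : G -> G) (e : G)
  (H : G -> Prop) : Prop :=
  exists S : list G, forall x, H x <-> generated_by mul inv e S x.

Definition normal_in_group {G : Type} (mul : G -> G -> G) (inv : G -> G)
  (M : G -> Prop) : Prop :=
  forall g m, M m -> M (mul (mul g m) (inv g)).

Fixpoint is_path {V : Type} (adj : V -> V -> Prop) (p : list V) : Prop :=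
  match p with
  | x :: ((y :: _) as q) => adj x y /\ is_path adj q
  | _ => True
  end.

Fixpoint no_backtrack {V : Type} (p : list V) : Prop :=
  match p with
  | x :: ((_ :: z :: _) as q) => x <> z /\ no_backtrack q
  | _ => True
  end.

Definition path_from_to {V : Type} (adj : V -> V -> Prop) (p : list V) (x y : V) : Prop :=
  is_path adj p /\ hd_error p = Some x /\ last p x = y.

Definition is_tree {V : Type} (adj : V -> V -> Prop) : Prop :=
  (forall x y, adj x y -> adj y x) /\
  (forall x, ~ adj x x) /\
  (forall x y, exists p, path_from_to adj p x y) /\
  (forall p x, path_from_to adj p x x -> 2 <= length p -> ~ no_backtrack p).

(** geodesic edge-path: a path of minimal length between its endpoints;
    its length (number of edges) is length p - 1 *)
Definition geodesic {V : Type} (adj : V -> V -> Prop) (p : list V) : Prop :=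
  exists x y, path_from_to adj p x y /\
    forall q, path_from_to adj q x y -> length p <= length q.

Definition subtree {V : Type} (adj : V -> V -> Prop) (S : V -> Prop) : Prop :=
  (exists v, S v) /\
  (forall x y, S x -> S y ->
     exists p, path_from_to adj p x y /\ forall v, In v p -> S v).

Definition is_action {G V : Type} (mul : G -> G -> G) (e : G) (act : G -> V -> V) : Prop :=
  (forall x, act e x = x) /\ (forall g h x, act (mul g h) x = act g (act h x)).

Definition by_automorphisms {G V : Type} (adj : V -> V -> Prop) (act : G -> V -> V) : Prop :=
  forall g x y, adj x y <-> adj (act g x) (act g y).

Definition without_inversions {G V : Type} (adj : V -> V -> Prop) (act : G -> V -> V) : Prop :=
  forall g x y, adj x y -> ~ (act g x = y /\ act g y = x).

Definition k_acylindrical {G V : Type} (e : G) (adj : V -> V -> Prop) (act : G -> V -> V)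
  (k : nat) : Prop :=
  forall (p : list V) (g : G), geodesic adj p -> k < length p - 1 ->
    (forall v, In v p -> act g v = v) -> g = e.

Definition minimal_action {G V : Type} (adj : V -> V -> Prop) (act : G -> V -> V) : Prop :=
  forall S : V -> Prop, subtree adj S -> (forall g v, S v -> S (act g v)) ->
    forall v, S v.

(** the action restricted to the subgroup H is cocompact: the quotient graph
    H\X is finite, i.e. finitely many H-orbits of vertices and of (oriented) edges *)
Definition cocompact_on {G V : Type} (H : G -> Prop) (adj : V -> V -> Prop)
  (act : G -> V -> V) : Prop :=
  (exists Vs : list V, forall v, exists g w, H g /\ In w Vs /\ act g w = v) /\
  (exists Es : list (V * V), forall x y, adj x y ->
     exists g a b, H g /\ In (a, b) Es /\ act g a = x /\ act g b = y).

(* Main.v *)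
Require Import Defs.
From Stdlib Require Import List Lia PeanoNat Classical.
Import ListNotations.
Set Implicit Arguments.

Section Lists.
Variable V : Type.

Definition pthR (R : V -> V -> Prop) (p : list V) : Prop :=
  forall i a b, nth_error p i = Some a -> nth_error p (S i) = Some b -> R a b.
Definition nbk (p : list V) : Prop :=
  forall i a c, nth_error p i = Some a -> nth_error p (S (S i)) = Some c -> a <> c.

Lemma pthR_cons2 R a b l : pthR R (a :: b :: l) <-> R a b /\ pthR R (b :: l).
Proof.
  split.
  - intros H; split. apply (H 0); reflexivity. intros i x y H1 H2. apply (H (S i)); assumption.
  - intros [H1 H2] [|i] x y E1 E2; simpl in *.
    + inversion E1; inversion E2; subst; auto.
    + apply (H2 i); assumption.
Qed.

Lemma pthR_short R l : length l <= 1 -> pthR R l.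
Proof.
  intros Hl i a b _ E. assert (length l <= S i) by lia.
  rewrite (proj2 (nth_error_None l (S i))) in E; [discriminate|lia].
Qed.

Lemma pthR_tail R a l : pthR R (a :: l) -> pthR R l.
Proof. intros H i x y E1 E2. apply (H (S i)); assumption. Qed.

Lemma nbk_cons3 a b c l : nbk (a :: b :: c :: l) <-> a <> c /\ nbk (b :: c :: l).
Proof.
  split.
  - intros H; split. apply (H 0); reflexivity. intros i x y H1 H2. apply (H (S i)); assumption.
  - intros [H1 H2] [|i] x y E1 E2; simpl in *.
    + inversion E1; inversion E2; subst; auto.
    + apply (H2 i); assumption.
Qed.

Lemma nbk_short l : length l <= 2 -> nbk l.
Proof.
  intros Hl i a b _ E. assert (length l <= S (S i)) by lia.
  rewrite (proj2 (nth_error_None l (S (S i)))) in E; [discriminate|lia].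
Qed.

Lemma nbk_tail a l : nbk (a :: l) -> nbk l.
Proof. intros H i x y E1 E2. apply (H (S i)); assumption. Qed.

Lemma is_path_iff R p : is_path R p <-> pthR R p.
Proof.
  induction p as [|a p IH].
  - simpl. split; auto. intros _. apply pthR_short. simpl; lia.
  - destruct p as [|b p].
    + simpl. split; auto. intros _. apply pthR_short. simpl; lia.
    + rewrite pthR_cons2. simpl. simpl in IH. rewrite <- IH. tauto.
Qed.

Lemma no_backtrack_iff p : no_backtrack p <-> nbk p.
Proof.
  induction p as [|a p IH].
  - simpl. split; auto. intros _. apply nbk_short. simpl; lia.
  - destruct p as [|b p].
    + simpl. split; auto. intros _. apply nbk_short. simpl; lia.
    + destruct p as [|c p].
      * simpl. split; auto. intros _. apply nbk_short. simpl; lia.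
      * rewrite nbk_cons3. change (no_backtrack (a :: b :: c :: p)) with (a <> c /\ no_backtrack (b :: c :: p)).
        rewrite IH. tauto.
Qed.

Ltac nth_app H := rewrite nth_error_app in H; destruct (Nat.ltb_spec _ _) in H.

Lemma nth_join_l (l1 : list V) w l2 i : i <= length l1 ->
  nth_error (l1 ++ w :: l2) i = nth_error (l1 ++ [w]) i.
Proof.
  intros Hi. destruct (Nat.lt_ge_cases i (length l1)).
  - rewrite !nth_error_app1 by lia. auto.
  - rewrite !nth_error_app2 by lia. replace (i - length l1) with 0 by lia. auto.
Qed.
Lemma nth_join_r (l1 : list V) w l2 i : length l1 <= i ->
  nth_error (l1 ++ w :: l2) i = nth_error (w :: l2) (i - length l1).
Proof. intros Hi. rewrite nth_error_app2 by lia. auto. Qed.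

Lemma pthR_join R l1 w l2 :
  pthR R (l1 ++ [w]) -> pthR R (w :: l2) -> pthR R (l1 ++ w :: l2).
Proof.
  intros H1 H2 i a b E1 E2.
  destruct (Nat.lt_ge_cases i (length l1)).
  - rewrite nth_join_l in E1, E2 by lia. eauto.
  - rewrite nth_join_r in E1, E2 by lia. apply (H2 (i - length l1)); auto.
    replace (S (i - length l1)) with (S i - length l1) by lia. auto.
Qed.

Lemma nbk_join l1 w l2 :
  nbk (l1 ++ [w]) -> nbk (w :: l2) ->
  (forall a b, nth_error l1 (length l1 - 1) = Some a -> nth_error l2 0 = Some b -> a <> b) ->
  nbk (l1 ++ w :: l2).
Proof.
  intros H1 H2 H3 i a c E1 E2.
  destruct (Nat.lt_ge_cases (S (S i)) (length l1 + 1)).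
  - rewrite nth_join_l in E1, E2 by lia. eauto.
  - destruct (Nat.lt_ge_cases i (length l1)).
    + assert (i = length l1 - 1) by lia. subst i.
      rewrite nth_error_app1 in E1 by lia.
      rewrite nth_error_app2 in E2 by lia.
      replace (S (S (length l1 - 1)) - length l1) with 1 in E2 by lia.
      apply H3; auto.
    + rewrite nth_join_r in E1, E2 by lia. apply (H2 (i - length l1)); auto.
      replace (S (S (i - length l1))) with (S (S i) - length l1) by lia. auto.
Qed.

Lemma pthR_rev R p : (forall x y, R x y -> R y x) -> pthR R p -> pthR R (rev p).
Proof.
  intros Hs H i a b E1 E2. rewrite nth_error_rev in E1, E2.
  destruct (Nat.ltb_spec i (length p)); [|discriminate].
  destruct (Nat.ltb_spec (S i) (length p)); [|discriminate].
  apply Hs. apply (H (length p - S (S i))); auto.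
  replace (S (length p - S (S i))) with (length p - S i) by lia. auto.
Qed.

Lemma nbk_rev p : nbk p -> nbk (rev p).
Proof.
  intros H i a b E1 E2. rewrite nth_error_rev in E1, E2.
  destruct (Nat.ltb_spec i (length p)); [|discriminate].
  destruct (Nat.ltb_spec (S (S i)) (length p)); [|discriminate].
  intro; subst. apply (H (length p - S (S (S i))) b b); auto.
  replace (S (S (length p - S (S (S i))))) with (length p - S i) by lia. auto.
Qed.

Lemma pthR_firstn R n p : pthR R p -> pthR R (firstn n p).
Proof.
  intros H i a b E1 E2. rewrite nth_error_firstn in E1, E2.
  destruct (Nat.ltb_spec i n); [|discriminate].
  destruct (Nat.ltb_spec (S i) n); [|discriminate]. eauto.
Qed.
Lemma pthR_skipn R n p : pthR R p -> pthR R (skipn n p).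
Proof.
  intros H i a b E1 E2. rewrite nth_error_skipn in E1, E2.
  apply (H (n + i)); auto. rewrite <- E2. f_equal. lia.
Qed.
Lemma nbk_firstn n p : nbk p -> nbk (firstn n p).
Proof.
  intros H i a b E1 E2. rewrite nth_error_firstn in E1, E2.
  destruct (Nat.ltb_spec i n); [|discriminate].
  destruct (Nat.ltb_spec (S (S i)) n); [|discriminate]. eauto.
Qed.
Lemma nbk_skipn n p : nbk p -> nbk (skipn n p).
Proof.
  intros H i a b E1 E2. rewrite nth_error_skipn in E1, E2.
  apply (H (n + i)); auto. rewrite <- E2. f_equal. lia.
Qed.

End Lists.

Lemma pthR_map (V W : Type) R (R' : W -> W -> Prop) (f : V -> W) p :
  (forall x y, R x y -> R' (f x) (f y)) -> pthR R p -> pthR R' (map f p).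
Proof.
  intros Hf H i a b E1 E2. rewrite nth_error_map in E1, E2.
  destruct (nth_error p i) eqn:F1; [|discriminate].
  destruct (nth_error p (S i)) eqn:F2; [|discriminate].
  simpl in *. inversion E1; inversion E2; subst. apply Hf. apply (H i); auto.
Qed.

Lemma nbk_map (V W : Type) (f : V -> W) p :
  (forall x y, f x = f y -> x = y) -> nbk p -> nbk (map f p).
Proof.
  intros Hf H i a b E1 E2. rewrite nth_error_map in E1, E2.
  destruct (nth_error p i) eqn:F1; [|discriminate].
  destruct (nth_error p (S (S i))) eqn:F2; [|discriminate].
  simpl in *. inversion E1; inversion E2; subst. intro E. apply Hf in E.
  apply (H i v v0); auto.
Qed.


Section Tree.
Variable V : Type.
Variable adj : V -> V -> Prop.
Hypothesis Hsym : forall x y, adj x y -> adj y x.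

Definition wk (p : list V) (x y : V) : Prop :=
  pthR adj p /\ nth_error p 0 = Some x /\ nth_error p (length p - 1) = Some y.
Definition rp (p : list V) (x y : V) : Prop := wk p x y /\ nbk p.

Lemma nth_last (p : list V) x : p <> [] -> nth_error p (length p - 1) = Some (last p x).
Proof.
  induction p as [|a p IH]; intros H; [congruence|].
  destruct p as [|b p]; [reflexivity|].
  simpl length. replace (S (S (length p)) - 1) with (S (length p)) by lia.
  simpl nth_error. specialize (IH ltac:(congruence)). simpl length in IH.
  replace (S (length p) - 1) with (length p) in IH by lia. rewrite IH. reflexivity.
Qed.

Lemma wk_pft p x y : path_from_to adj p x y <-> wk p x y.
Proof.
  unfold path_from_to, wk. rewrite is_path_iff.
  destruct p as [|a p].
  - simpl. split; intros H; decompose [and] H; discriminate.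
  - rewrite (@nth_last (a :: p) x) by congruence. simpl hd_error. simpl nth_error at 1.
    split; intros [H1 [H2 H3]]; repeat split; try congruence; auto.
Qed.

Lemma wk_len p x y : wk p x y -> 1 <= length p.
Proof.
  intros [_ [H _]]. destruct p; simpl in *; [discriminate|lia].
Qed.

Lemma wk_cons p x y : wk p x y -> p = x :: tl p.
Proof. intros [_ [H _]]. destruct p; simpl in *; [discriminate|congruence]. Qed.

Lemma wk_rev p x y : wk p x y -> wk (rev p) y x.
Proof.
  intros Hw. pose proof (wk_len Hw). destruct Hw as [H1 [H2 H3]].
  repeat split.
  - apply pthR_rev; auto.
  - rewrite nth_error_rev. destruct (Nat.ltb_spec 0 (length p)); [|lia].
    rewrite <- H3. f_equal; try lia.
  - rewrite nth_error_rev, length_rev. destruct (Nat.ltb_spec (length p - 1) (length p)); [|lia].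
    rewrite <- H2. f_equal; try lia.
Qed.

Lemma rp_rev p x y : rp p x y -> rp (rev p) y x.
Proof. intros [H1 H2]. split. apply wk_rev; auto. apply nbk_rev; auto. Qed.

Lemma wk_join l1 w l2 x y : wk (l1 ++ [w]) x w -> wk (w :: l2) w y -> wk (l1 ++ w :: l2) x y.
Proof.
  intros [A1 [A2 A3]] [B1 [B2 B3]]. repeat split.
  - apply pthR_join; auto.
  - rewrite nth_join_l by lia. auto.
  - rewrite nth_join_r by (rewrite length_app; simpl; lia).
    rewrite <- B3. f_equal. rewrite length_app. simpl. lia.
Qed.

Lemma rp_join l1 w l2 x y : rp (l1 ++ [w]) x w -> rp (w :: l2) w y ->
  (forall a b, nth_error l1 (length l1 - 1) = Some a -> nth_error l2 0 = Some b -> a <> b) ->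
  rp (l1 ++ w :: l2) x y.
Proof.
  intros [A1 A2] [B1 B2] H. split. eapply wk_join; eauto. apply nbk_join; auto.
Qed.

Lemma wk_firstn p x y i w : wk p x y -> nth_error p i = Some w -> wk (firstn (S i) p) x w.
Proof.
  intros [H1 [H2 H3]] E. assert (i < length p) by (apply nth_error_Some; congruence).
  repeat split.
  - apply pthR_firstn; auto.
  - rewrite nth_error_firstn. destruct (Nat.ltb_spec 0 (S i)); [auto|lia].
  - rewrite nth_error_firstn, length_firstn. replace (min (S i) (length p) - 1) with i by lia.
    destruct (Nat.ltb_spec i (S i)); [auto|lia].
Qed.

Lemma wk_skipn p x y i w : wk p x y -> nth_error p i = Some w -> wk (skipn i p) w y.
Proof.
  intros [H1 [H2 H3]] E. assert (i < length p) by (apply nth_error_Some; congruence).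
  repeat split.
  - apply pthR_skipn; auto.
  - rewrite nth_error_skipn. rewrite <- E. f_equal; try lia.
  - rewrite nth_error_skipn, length_skipn. rewrite <- H3. f_equal; try lia.
Qed.

Lemma rp_firstn p x y i w : rp p x y -> nth_error p i = Some w -> rp (firstn (S i) p) x w.
Proof. intros [A B] E. split. eapply wk_firstn; eauto. apply nbk_firstn; auto. Qed.
Lemma rp_skipn p x y i w : rp p x y -> nth_error p i = Some w -> rp (skipn i p) w y.
Proof. intros [A B] E. split. eapply wk_skipn; eauto. apply nbk_skipn; auto. Qed.

Lemma last_default (l : list V) a b : l <> [] -> last l a = last l b.
Proof.
  induction l as [|c l IH]; intros H; [congruence|]. destruct l; [reflexivity|].
  simpl. apply IH. congruence.
Qed.

Lemma last_cons2 (l : list V) a d d' : l <> [] -> last (a :: l) d = last l d'.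
Proof. intros H. destruct l; [congruence|]. change (last (v :: l) d = last (v :: l) d'). apply last_default. congruence. Qed.

Lemma reduce (R : V -> V -> Prop) l x : pthR R (x :: l) ->
  exists l', pthR R (x :: l') /\ nbk (x :: l') /\ last (x :: l') x = last (x :: l) x /\
    incl (x :: l') (x :: l) /\ length l' <= length l.
Proof.
  revert x. induction l as [|y l IH]; intros x H.
  - exists []. repeat split; auto. apply nbk_short; simpl; lia. apply incl_refl.
  - apply pthR_cons2 in H. destruct H as [Hxy H].
    destruct (IH y H) as [l1 [P1 [N1 [L1 [I1 Len1]]]]].
    destruct l1 as [|z l2].
    + exists [y]. split; [|split; [|split; [|split]]].
      * apply pthR_cons2. split; auto; try (apply pthR_short; simpl; lia).
      * apply nbk_short; simpl; lia.
      * simpl in L1. simpl. destruct l; auto. rewrite L1. apply last_default. congruence.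
      * intros v Hv. simpl in Hv. simpl. tauto.
      * simpl. lia.
    + destruct (classic (z = x)) as [Ezx|Nzx].
      * subst z. exists l2. split; [|split; [|split; [|split]]].
        -- apply pthR_cons2 in P1. tauto.
        -- apply nbk_tail in N1. auto.
        -- transitivity (last (y :: x :: l2) y). 
           ++ simpl. destruct l2; auto. apply last_default. congruence.
           ++ rewrite L1. simpl. destruct l; auto. apply last_default. congruence.
        -- intros v Hv. destruct Hv as [Hv|Hv]; [left; auto|].
           right. apply I1. simpl; auto.
        -- simpl in Len1. simpl. lia.
      * exists (y :: z :: l2). split; [|split; [|split; [|split]]].
        -- apply pthR_cons2. split; auto.
        -- apply nbk_cons3. split; auto; try (intro; congruence).
        -- rewrite (@last_cons2 (y :: z :: l2) x x y) by congruence.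
           rewrite (@last_cons2 (y :: l) x x y) by congruence. auto.
        -- intros v Hv. destruct Hv as [Hv|Hv]; [left; auto|]. right. apply I1. auto.
        -- simpl in *. lia.
Qed.

Lemma reduce_wk (R : V -> V -> Prop) p x y : pthR R p -> nth_error p 0 = Some x ->
  nth_error p (length p - 1) = Some y ->
  exists q, pthR R q /\ nbk q /\ nth_error q 0 = Some x /\ nth_error q (length q - 1) = Some y /\
    incl q p /\ length q <= length p.
Proof.
  intros H1 H2 H3. destruct p as [|a l]; [discriminate|]. simpl in H2. inversion H2; subst a.
  destruct (reduce H1) as [l' [P [N [L [I Le]]]]].
  exists (x :: l'). repeat split; auto.
  - rewrite (@nth_last (x :: l') x) by congruence. rewrite L.
    rewrite (@nth_last (x :: l) x) in H3 by congruence. auto.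
  - simpl. lia.
Qed.

End Tree.

Section Tree2.
Variable V : Type.
Variable adj : V -> V -> Prop.
Hypothesis Hsym : forall x y, adj x y -> adj y x.
Hypothesis Hconn : forall x y, exists p, wk adj p x y.
Hypothesis Hcyc : forall p x, wk adj p x x -> 2 <= length p -> ~ nbk p.

Lemma rp_exists x y : exists p, rp adj p x y.
Proof.
  destruct (Hconn x y) as [p [H1 [H2 H3]]].
  destruct (reduce_wk H1 H2 H3) as [q [A [B [C [D _]]]]].
  exists q. split; auto. split; auto.
Qed.

Lemma rp_tl x a r y : rp adj (x :: a :: r) x y -> rp adj (a :: r) a y.
Proof. intros H. apply (rp_skipn 1 H). reflexivity. Qed.

Lemma nth_rev_last (a : V) r : nth_error (rev (a :: r)) (length (rev (a :: r)) - 1) = Some a.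
Proof.
  rewrite nth_error_rev, length_rev. destruct (Nat.ltb_spec (length (a :: r) - 1) (length (a :: r))).
  - replace (length (a :: r) - S (length (a :: r) - 1)) with 0 by (simpl; lia). reflexivity.
  - simpl in *; lia.
Qed.

Lemma rp_unique_aux l : forall x y l', rp adj (x :: l) x y -> rp adj (x :: l') x y -> l = l'.
Proof.
  induction l as [|a r IH]; intros x y l' H1 H2.
  - destruct l' as [|b r']; auto. exfalso.
    destruct H1 as [[_ [_ E]] _]. simpl in E. inversion E; subst y.
    destruct H2 as [W N]. apply (Hcyc W); simpl; auto. lia.
  - destruct l' as [|b r'].
    + exfalso. destruct H2 as [[_ [_ E]] _]. simpl in E. inversion E; subst y.
      destruct H1 as [W N]. apply (Hcyc W); simpl; auto. lia.
    + destruct (classic (a = b)) as [E|E].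
      * subst b. f_equal. apply (IH a y). eapply rp_tl; eauto. eapply rp_tl; eauto.
      * exfalso. assert (HW : rp adj (rev (a :: r) ++ x :: b :: r') y y).
        { apply rp_join with (w := x).
          - change (rev (a :: r) ++ [x]) with (rev (x :: a :: r)). apply rp_rev; auto.
          - auto.
          - intros a' b' E1 E2. rewrite nth_rev_last in E1. simpl in E2. congruence. }
        destruct HW as [W N]. apply (Hcyc W); auto. rewrite length_app. simpl. lia.
Qed.

Lemma rp_unique p q x y : rp adj p x y -> rp adj q x y -> p = q.
Proof.
  intros H1 H2. pose proof (wk_cons (proj1 H1)) as E1. pose proof (wk_cons (proj1 H2)) as E2.
  destruct p as [|a p]; [discriminate|]. destruct q as [|b q]; [discriminate|].
  simpl in E1, E2. inversion E1; inversion E2; subst. f_equal. eapply rp_unique_aux; eauto.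
Qed.

Lemma rp_shortest p q x y : rp adj p x y -> wk adj q x y -> length p <= length q.
Proof.
  intros H [H1 [H2 H3]]. destruct (reduce_wk H1 H2 H3) as [q' [A [B [C [D [_ Le]]]]]].
  assert (p = q') by (eapply rp_unique; eauto; split; auto; split; auto). subst. auto.
Qed.

Lemma rp_in_walk (R : V -> V -> Prop) q p x y : (forall a b, R a b -> adj a b) ->
  pthR R q -> nth_error q 0 = Some x -> nth_error q (length q - 1) = Some y ->
  rp adj p x y -> incl p q /\ pthR R p.
Proof.
  intros HR H1 H2 H3 Hp. destruct (reduce_wk H1 H2 H3) as [q' [A [B [C [D [I _]]]]]].
  assert (p = q').
  { eapply rp_unique; eauto. split; auto. split; auto.
    intros i a b E1 E2. apply HR. eapply A; eauto. }
  subst. auto.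
Qed.

Lemma rp_subtree S p x y : subtree adj S -> S x -> S y -> rp adj p x y -> forall v, In v p -> S v.
Proof.
  intros [_ HS] Hx Hy Hp v Hv. destruct (HS x y Hx Hy) as [q [Hq Hin]].
  apply wk_pft in Hq. destruct Hq as [A [B C]].
  destruct (@rp_in_walk adj q p x y (fun a b h => h) A B C Hp) as [I _]. auto.
Qed.

Lemma rp_geodesic p x y : rp adj p x y -> geodesic adj p.
Proof.
  intros Hp. exists x, y. split. apply wk_pft. apply Hp.
  intros q Hq. apply wk_pft in Hq. eapply rp_shortest; eauto.
Qed.

Lemma rp_nodup_aux p x y : rp adj p x y -> forall i j v, i < j -> nth_error p i = Some v -> nth_error p j = Some v -> False.
Proof.
  intros Hp i j v Hij Ei Ej.
  pose proof (rp_firstn j Hp Ej) as H1.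
  assert (Ei' : nth_error (firstn (S j) p) i = Some v).
  { rewrite nth_error_firstn. destruct (Nat.ltb_spec i (S j)); [auto|lia]. }
  pose proof (rp_skipn i H1 Ei') as [W N].
  apply (Hcyc W); auto. rewrite length_skipn, length_firstn.
  assert (j < length p) by (apply nth_error_Some; congruence). lia.
Qed.

Lemma rp_nodup p x y : rp adj p x y -> NoDup p.
Proof.
  intros Hp. apply NoDup_nth_error. intros i j Hi E.
  destruct (Nat.lt_trichotomy i j) as [H|[H|H]]; auto; exfalso.
  - destruct (nth_error p i) as [v|] eqn:F; [|apply nth_error_None in F; lia].
    eapply rp_nodup_aux; eauto.
  - destruct (nth_error p i) as [v|] eqn:F; [|apply nth_error_None in F; lia].
    eapply rp_nodup_aux with (i := j) (j := i); eauto.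
Qed.

End Tree2.

Section Tree3.
Variable V : Type.
Variable adj : V -> V -> Prop.
Hypothesis Hsym : forall x y, adj x y -> adj y x.
Hypothesis Hconn : forall x y, exists p, wk adj p x y.
Hypothesis Hcyc : forall p x, wk adj p x x -> 2 <= length p -> ~ nbk p.

Lemma rp_cat A B x w y : rp adj A x w -> rp adj B w y ->
  (forall a b, 2 <= length A -> nth_error A (length A - 2) = Some a -> nth_error B 1 = Some b -> a <> b) ->
  rp adj (A ++ tl B) x y.
Proof.
  intros HA HB J.
  assert (EA : A = removelast A ++ [w]).
  { destruct HA as [[_ [H1 H2]] _]. assert (A <> []) by (destruct A; simpl in *; congruence).
    rewrite (app_removelast_last w H) at 1. f_equal. rewrite (nth_last w H) in H2. congruence. }
  assert (EB : B = w :: tl B) by (apply (wk_cons (proj1 HB))).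
  rewrite EA. rewrite <- app_assoc. simpl.
  apply rp_join.
  - rewrite <- EA; auto.
  - rewrite <- EB; auto.
  - intros a b E1 E2. apply J.
    + rewrite EA, length_app. simpl. destruct (removelast A); simpl in *; [discriminate|lia].
    + rewrite EA, length_app. simpl. rewrite nth_error_app1 by (destruct (removelast A); simpl in *; [discriminate|lia]).
      rewrite <- E1. f_equal. lia.
    + rewrite EB. simpl. auto.
Qed.

Lemma nth_rev_2 (l : list V) : 2 <= length l -> nth_error (rev l) (length l - 2) = nth_error l 1.
Proof.
  intros H. rewrite nth_error_rev. destruct (Nat.ltb_spec (length l - 2) (length l)); [|lia].
  f_equal. lia.
Qed.

Definition HT (a b v : V) : Prop := exists r, rp adj (a :: b :: r) a v.

Lemma rp_two a b : adj a b -> rp adj [a; b] a b.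
Proof.
  intros H. split. split. apply pthR_cons2. split; auto. apply pthR_short; simpl; lia.
  split; reflexivity. apply nbk_short; simpl; lia.
Qed.

Lemma rp_one a : rp adj [a] a a.
Proof. split. split. apply pthR_short; simpl; lia. split; reflexivity. apply nbk_short; simpl; lia. Qed.

Lemma HT_self a b : adj a b -> HT a b b.
Proof. intros H. exists []. apply rp_two; auto. Qed.

Lemma HT_dich a b v : adj a b -> HT a b v \/ HT b a v.
Proof.
  intros Hab. destruct (rp_exists Hconn a v) as [P HP].
  pose proof (wk_cons (proj1 HP)) as E.
  destruct P as [|a' t]; [discriminate|]. simpl in E. inversion E; subst a'.
  destruct t as [|c r].
  - right. exists []. destruct HP as [[_ [_ H3]] _]. simpl in H3. inversion H3; subst v.
    apply rp_two; auto.
  - destruct (classic (c = b)) as [Ecb|Ncb].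
    + subst c. left. exists r. auto.
    + right. exists (c :: r).
      change (b :: a :: c :: r) with ([b; a] ++ tl (a :: c :: r)).
      apply rp_cat with (w := a). apply rp_two; auto. auto.
      intros x y _ E1 E2. simpl in E1, E2. inversion E1; inversion E2; subst. congruence.
Qed.

Lemma HT_excl a b v : HT a b v -> HT b a v -> False.
Proof.
  intros [r H1] [r' H2].
  pose proof (rp_tl H2) as H3.
  pose proof (rp_unique Hsym Hcyc H1 H3) as E. inversion E; subst r'.
  destruct H2 as [_ N]. apply (N 0 b b); reflexivity.
Qed.

Lemma HT_compl_convex a b x y p w : adj a b -> HT b a x -> HT b a y -> rp adj p x y -> In w p -> ~ HT a b w.
Proof.
  intros Hab [rx Hx] [ry Hy] Hp Hw [rw HwP].
  apply In_nth_error in Hw. destruct Hw as [i Ei].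
  assert (P1 : rp adj (rev (a :: rx) ++ b :: rw) x w).
  { change (b :: rw) with (tl (a :: b :: rw)). apply rp_cat with (w := a).
    - exact (rp_rev Hsym (rp_tl Hx)).
    - auto.
    - intros c d L E1 E2. rewrite length_rev in L, E1. rewrite nth_rev_2 in E1 by auto.
      simpl in E2. inversion E2; subst d. destruct rx as [|r0 rx]; simpl in E1; [discriminate|].
      inversion E1; subst c. intro; subst. destruct Hx as [_ N]. apply (N 0 b b); reflexivity. }
  assert (P2 : rp adj (rev (b :: rw) ++ a :: ry) w y).
  { change (a :: ry) with (tl (b :: a :: ry)). apply rp_cat with (w := b).
    - exact (rp_rev Hsym (rp_tl HwP)).
    - auto.
    - intros c d L E1 E2. rewrite length_rev in L, E1. rewrite nth_rev_2 in E1 by auto.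
      simpl in E2. inversion E2; subst d. destruct rw as [|r0 rw]; simpl in E1; [discriminate|].
      inversion E1; subst c. intro; subst. destruct HwP as [_ N]. apply (N 0 a a); reflexivity. }
  pose proof (rp_unique Hsym Hcyc (rp_firstn i Hp Ei) P1) as F1.
  pose proof (rp_unique Hsym Hcyc (rp_skipn i Hp Ei) P2) as F2.
  assert (Li : length (firstn (S i) p) = S i).
  { rewrite length_firstn. assert (i < length p) by (apply nth_error_Some; congruence). lia. }
  rewrite F1, length_app, length_rev in Li. simpl in Li.
  apply (rp_nodup_aux Hcyc Hp) with (i := length rx) (j := i + length rw + 1) (v := a).
  - lia.
  - assert (nth_error (firstn (S i) p) (length rx) = Some a).
    { rewrite F1. rewrite nth_error_app1 by (rewrite length_rev; simpl; lia).
      rewrite nth_error_rev. simpl length. destruct (Nat.ltb_spec (length rx) (S (length rx))); [|lia].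
      replace (S (length rx) - S (length rx)) with 0 by lia. reflexivity. }
    rewrite nth_error_firstn in H. destruct (Nat.ltb_spec (length rx) (S i)); [auto|discriminate].
  - replace (i + length rw + 1) with (i + (length rw + 1)) by lia. rewrite <- nth_error_skipn. rewrite F2.
    rewrite nth_error_app2 by (rewrite length_rev; simpl; lia). rewrite length_rev. simpl.
    replace (length rw + 1 - S (length rw)) with 0 by lia. reflexivity.
Qed.

End Tree3.

Section Act.
Variable G : Type.
Variables (mul : G -> G -> G) (inv : G -> G) (e : G).
Hypothesis Hgrp : is_group mul inv e.
Variable V : Type.
Variable adj : V -> V -> Prop.
Hypothesis Hsym : forall x y, adj x y -> adj y x.
Hypothesis Hirr : forall x, ~ adj x x.
Hypothesis Hconn : forall x y, exists p, wk adj p x y.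
Hypothesis Hcyc : forall p x, wk adj p x x -> 2 <= length p -> ~ nbk p.
Variable act : G -> V -> V.
Hypothesis Hact : is_action mul e act.
Hypothesis Haut : by_automorphisms adj act.
Hypothesis Hninv : without_inversions adj act.
Hypothesis Hmin : minimal_action adj act.

Lemma act_e x : act e x = x.
Proof. apply (proj1 Hact). Qed.
Lemma act_mul g h x : act (mul g h) x = act g (act h x).
Proof. apply (proj2 Hact). Qed.
Lemma act_inv_l g x : act (inv g) (act g x) = x.
Proof. rewrite <- act_mul. destruct Hgrp as [_ [_ [_ [H _]]]]. rewrite H. apply act_e. Qed.
Lemma act_inv_r g x : act g (act (inv g) x) = x.
Proof. rewrite <- act_mul. destruct Hgrp as [_ [_ [_ [_ H]]]]. rewrite H. apply act_e. Qed.
Lemma act_inj g x y : act g x = act g y -> x = y.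
Proof. intros H. rewrite <- (act_inv_l g x), <- (act_inv_l g y). congruence. Qed.
Lemma adj_act g x y : adj x y -> adj (act g x) (act g y).
Proof. apply Haut. Qed.

Lemma rp_act g p x y : rp adj p x y -> rp adj (map (act g) p) (act g x) (act g y).
Proof.
  intros [[H1 [H2 H3]] H4]. split. split; [|split].
  - apply pthR_map with (R := adj); auto. intros; apply adj_act; auto.
  - rewrite nth_error_map, H2. reflexivity.
  - rewrite length_map, nth_error_map, H3. reflexivity.
  - apply nbk_map; auto. apply act_inj.
Qed.

Lemma HT_act g a b v : HT adj a b v -> HT adj (act g a) (act g b) (act g v).
Proof. intros [r H]. exists (map (act g) r). apply (rp_act g H). Qed.

Definition convex (Z : V -> Prop) : Prop :=
  forall p x y v, Z x -> Z y -> rp adj p x y -> In v p -> Z v.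

Lemma convex_subtree Z : convex Z -> (exists v, Z v) -> subtree adj Z.
Proof.
  intros HC Hne. split; auto. intros x y Hx Hy. destruct (rp_exists Hconn x y) as [p Hp].
  exists p. split. apply wk_pft, Hp. intros v Hv. exact (HC p x y v Hx Hy Hp Hv).
Qed.

Lemma subtree_convex Z : subtree adj Z -> convex Z.
Proof. intros HS p x y v Hx Hy Hp Hv. exact (rp_subtree Hsym Hcyc HS Hx Hy Hp v Hv). Qed.

Lemma minimal' Z : convex Z -> (exists v, Z v) -> (forall g v, Z v -> Z (act g v)) -> forall v, Z v.
Proof. intros HC Hne HI. apply Hmin; auto. apply convex_subtree; auto. Qed.

Lemma covering a b : adj a b -> forall v, exists d, HT adj a b (act d v).
Proof.
  intros Hab v0. apply NNPP. intros Hn.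
  set (C := fun v => forall d, ~ HT adj a b (act d v)).
  assert (C v0). { intros d Hd. apply Hn. exists d; auto. }
  assert (HC : forall v, C v).
  { apply minimal'.
    - intros p x y v Hx Hy Hp Hv; unfold C in *; intros d Hd.
      assert (Hx' : HT adj b a (act d x)) by (destruct (HT_dich Hsym Hconn a b (act d x) Hab); [exfalso; eapply Hx; eauto|auto]).
      assert (Hy' : HT adj b a (act d y)) by (destruct (HT_dich Hsym Hconn a b (act d y) Hab); [exfalso; eapply Hy; eauto|auto]).
      eapply (HT_compl_convex Hsym Hcyc Hab Hx' Hy' (rp_act d Hp)); eauto.
      apply in_map; auto.
    - exists v0; auto.
    - intros g v Hv; unfold C in *; intros d Hd. apply (Hv (mul d g)). rewrite act_mul. auto. }
  apply (HC b e). rewrite act_e. apply HT_self; auto.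
Qed.

Lemma deg2 p q : adj p q -> forall v, exists a c, adj v a /\ adj v c /\ a <> c.
Proof.
  intros Hpq.
  set (Sd := fun v => exists a c, adj v a /\ adj v c /\ a <> c).
  assert (Hne : exists v, Sd v).
  { apply NNPP. intros Hn.
    assert (U : forall v a c, adj v a -> adj v c -> a = c).
    { intros v a c H1 H2. apply NNPP. intros H3. apply Hn. exists v, a, c. auto. }
    assert (Two : forall v, v = p \/ v = q).
    { intros v. destruct (rp_exists Hconn p v) as [P HP].
      pose proof (wk_cons (proj1 HP)) as E. destruct P as [|p' t]; [discriminate|].
      simpl in E. inversion E; subst p'.
      destruct t as [|c r].
      - left. destruct HP as [[_ [_ H]] _]. simpl in H. congruence.
      - assert (c = q). { destruct HP as [[H _] _]. apply pthR_cons2 in H. apply (U p); tauto. }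
        subst c. destruct r as [|d r].
        + right. destruct HP as [[_ [_ H]] _]. simpl in H. congruence.
        + exfalso. destruct HP as [[H _] N]. apply pthR_cons2 in H. destruct H as [_ H].
          apply pthR_cons2 in H. destruct H as [H _].
          assert (d = p) by (apply (U q); auto). subst d. apply (N 0 p p); reflexivity. }
    assert (Hp : forall v, v = p).
    { apply minimal'.
      - intros P x y v Hx Hy HP Hv. subst x y.
        pose proof (rp_unique Hsym Hcyc HP (rp_one adj p)). subst P. destruct Hv; [auto|contradiction].
      - exists p; auto.
      - intros g v Hv. subst v. destruct (Two (act g p)) as [E|E]; auto. exfalso.
        destruct (Two (act g q)) as [E'|E'].
        + unfold without_inversions in Hninv. apply (@Hninv g p q Hpq). auto.
        + apply (@Hirr q). pose proof (@adj_act g p q Hpq). rewrite E, E' in H. auto. }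
    apply (@Hirr p). rewrite <- (Hp q) at 2. auto. }
  apply minimal'; auto.
  - intros P x y v Hx Hy HP Hv. apply In_nth_error in Hv. destruct Hv as [i Ei].
    destruct HP as [[H1 [H2 H3]] N].
    destruct i as [|i]. { rewrite H2 in Ei. inversion Ei; subst; auto. }
    assert (Hi : S i < length P) by (apply nth_error_Some; congruence).
    destruct (Nat.eq_dec (Datatypes.S i) (length P - 1)) as [Ei'|Ei'].
    { rewrite <- Ei' in H3. rewrite Ei in H3. inversion H3; subst; auto. }
    destruct (nth_error P i) as [a|] eqn:Fa; [|apply nth_error_None in Fa; lia].
    destruct (nth_error P (S (Datatypes.S i))) as [c|] eqn:Fc; [|apply nth_error_None in Fc; lia].
    unfold Sd. exists a, c. split; [apply Hsym; eapply H1; eauto|]. split; [eapply H1; eauto|]. eapply N; eauto.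
  - intros g v Hv; unfold Sd in *; destruct Hv as [a [c [H1 [H2 H3]]]]. exists (act g a), (act g c). split; [apply adj_act; auto|].
    split; [apply adj_act; auto|]. intro E. apply H3. eapply act_inj; eauto.
Qed.

Lemma long_path p q : adj p q -> forall n, exists L0 u w, rp adj (L0 ++ [u; w]) p w /\
  nth_error (L0 ++ [u; w]) 1 = Some q /\ n <= length (L0 ++ [u; w]).
Proof.
  intros Hpq n. induction n as [|n IH].
  - exists [], p, q. split. apply rp_two; auto. split; [reflexivity|simpl; lia].
  - destruct IH as [L0 [u [w [H1 [H2 H3]]]]].
    destruct (deg2 Hpq w) as [a [c [Ha [Hc Hac]]]].
    assert (exists w', adj w w' /\ w' <> u) as [w' [Hw' Nw']].
    { destruct (classic (a = u)); [exists c; split; auto; congruence|exists a; auto]. }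
    exists (L0 ++ [u]), w, w'.
    assert (E : (L0 ++ [u]) ++ [w; w'] = (L0 ++ [u; w]) ++ tl [w; w']) by (rewrite <- !app_assoc; reflexivity).
    rewrite E. split; [|split].
    + apply rp_cat with (w := w); auto. apply rp_two; auto.
      intros x y L E1 E2. rewrite length_app in E1. simpl in E1.
      rewrite nth_error_app2 in E1 by lia. replace (length L0 + 2 - 2 - length L0) with 0 in E1 by lia.
      simpl in E1, E2. congruence.
    + rewrite nth_error_app1; auto. rewrite length_app; simpl; lia.
    + rewrite !length_app in *. simpl in *. lia.
Qed.

Lemma deep p q L0 u w t v P : rp adj (L0 ++ [u; w]) p w -> nth_error (L0 ++ [u; w]) 1 = Some q ->
  HT adj u w t -> ~ HT adj p q v -> rp adj P v t -> length (L0 ++ [u; w]) <= length P.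
Proof.
  intros HL Hq [rt Ht] Hv HP.
  assert (M1 : rp adj ((L0 ++ [u; w]) ++ rt) p t).
  { change rt with (tl (w :: rt)). apply rp_cat with (w := w); auto. apply (rp_tl Ht).
    intros x y L E1 E2. rewrite length_app in E1. simpl in E1.
    rewrite nth_error_app2 in E1 by lia. replace (length L0 + 2 - 2 - length L0) with 0 in E1 by lia.
    simpl in E1, E2. inversion E1; subst x. destruct rt as [|r0 rt]; simpl in E2; [discriminate|].
    inversion E2; subst y. intro; subst. destruct Ht as [_ N]. apply (N 0 r0 r0); reflexivity. }
  destruct (rp_exists Hconn p v) as [Pv HPv].
  pose proof (wk_cons (proj1 HPv)) as EPv.
  assert (W : rp adj (rev Pv ++ tl ((L0 ++ [u; w]) ++ rt)) v t).
  { apply rp_cat with (w := p); auto. apply rp_rev; auto.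
    intros x y L E1 E2. rewrite length_rev in L, E1. rewrite nth_rev_2 in E1 by auto.
    rewrite nth_error_app1 in E2 by (rewrite !length_app; simpl; lia).
    rewrite Hq in E2. inversion E2; subst y. intro; subst x. apply Hv.
    rewrite EPv in HPv, E1. destruct (tl Pv) as [|r0 rv]; simpl in E1; [discriminate|].
    inversion E1; subst r0. exists rv. auto. }
  rewrite (rp_unique Hsym Hcyc HP W). rewrite (length_app (rev Pv)), length_rev.
  assert (T1 : length (tl ((L0 ++ [u; w]) ++ rt)) = length ((L0 ++ [u; w]) ++ rt) - 1)
    by (destruct ((L0 ++ [u; w]) ++ rt); simpl; lia).
  rewrite T1. rewrite (length_app (L0 ++ [u; w]) rt).
  pose proof (wk_len (proj1 HPv)). assert (2 <= length (L0 ++ [u; w])) by (rewrite length_app; simpl; lia). lia.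
Qed.

End Act.

Lemma max_index (Pr : nat -> Prop) N : Pr 0 -> exists j, j <= N /\ Pr j /\ forall i, j < i <= N -> ~ Pr i.
Proof.
  intros H0. induction N as [|N IH].
  - exists 0. repeat split; auto. intros i Hi. lia.
  - destruct IH as [j [H1 [H2 H3]]]. destruct (classic (Pr (S N))).
    + exists (S N). repeat split; auto. intros i Hi. lia.
    + exists j. repeat split; auto. intros i Hi. destruct (Nat.eq_dec i (S N)); [subst; auto|].
      apply H3. lia.
Qed.

Lemma least_nat (Pr : nat -> Prop) : (exists n, Pr n) -> exists n, Pr n /\ forall k, Pr k -> n <= k.
Proof.
  intros [n Hn]. apply NNPP. intros Hno.
  assert (forall m, forall k, k <= m -> ~ Pr k).
  { induction m as [|m IH]; intros k Hk Hp.
    - apply Hno. exists k. split; auto. intros; lia.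
    - destruct (Nat.eq_dec k (S m)).
      + subst. apply Hno. exists (S m). split; auto. intros k' Hk'.
        destruct (Nat.le_gt_cases (S m) k'); auto. exfalso. apply (IH k'); [lia|auto].
      + apply (IH k); [lia|auto]. }
  eapply H; eauto.
Qed.

Section Ell.
Variable G : Type.
Variables (mul : G -> G -> G) (inv : G -> G) (e : G).
Hypothesis Hgrp : is_group mul inv e.
Variable V : Type.
Variable adj : V -> V -> Prop.
Hypothesis Hsym : forall x y, adj x y -> adj y x.
Hypothesis Hirr : forall x, ~ adj x x.
Hypothesis Hconn : forall x y, exists p, wk adj p x y.
Hypothesis Hcyc : forall p x, wk adj p x x -> 2 <= length p -> ~ nbk p.
Variable act : G -> V -> V.
Hypothesis Hact : is_action mul e act.
Hypothesis Haut : by_automorphisms adj act.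
Hypothesis Hninv : without_inversions adj act.
Hypothesis Hmin : minimal_action adj act.
Variable k : nat.
Hypothesis Hacyl : k_acylindrical e adj act k.
Variable M : G -> Prop.
Hypothesis HM : is_subgroup mul inv e M.
Hypothesis Hnorm : normal_in_group mul inv M.

Lemma fixed_path g P x y : act g x = x -> act g y = y -> rp adj P x y -> forall v, In v P -> act g v = v.
Proof.
  intros Hx Hy HP v Hv. pose proof (rp_act Hgrp Hact Haut g HP) as H. rewrite Hx, Hy in H.
  pose proof (rp_unique Hsym Hcyc H HP) as E.
  apply In_nth_error in Hv. destruct Hv as [i Ei].
  assert (nth_error (map (act g) P) i = Some (act g v)) by (apply map_nth_error; auto).
  rewrite E, Ei in H0. congruence.
Qed.

Lemma fix_short g P x y : g <> e -> act g x = x -> act g y = y -> rp adj P x y -> length P <= S k.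
Proof.
  intros Hg Hx Hy HP. destruct (Nat.le_gt_cases (length P) (S k)); auto. exfalso. apply Hg.
  apply (@Hacyl P g). eapply rp_geodesic; eauto. lia. intros v Hv. exact (@fixed_path g P x y Hx Hy HP v Hv).
Qed.

Lemma midpoint g c Z z : act g c = c -> convex adj Z -> Z z -> (forall v, Z v -> Z (act g v)) ->
  exists f, act g f = f /\ Z f.
Proof.
  intros Hc HZ Hz Hinv.
  destruct (rp_exists Hconn c z) as [P HP].
  pose proof (rp_act Hgrp Hact Haut g HP) as HQ. rewrite Hc in HQ.
  set (Q := map (act g) P) in *.
  assert (L0 : 1 <= length P) by (apply (wk_len (proj1 HP))).
  destruct (max_index (fun j => nth_error P j = nth_error Q j) (length P - 1)) as [j [Hj1 [Hj2 Hj3]]].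
  { destruct HP as [[_ [A _]] _]. destruct HQ as [[_ [B _]] _]. congruence. }
  destruct (nth_error P j) as [b|] eqn:Eb; [|apply nth_error_None in Eb; lia].
  assert (Hb : act g b = b).
  { assert (nth_error Q j = Some (act g b)) by (apply map_nth_error; auto). congruence. }
  exists b. split; auto.
  destruct (Nat.eq_dec j (length P - 1)) as [Ej|Ej].
  { subst j. destruct HP as [[_ [_ A]] _]. rewrite A in Eb. inversion Eb; subst; auto. }
  assert (Eb' : nth_error Q j = Some b) by congruence.
  assert (W : rp adj (rev (skipn j P) ++ tl (skipn j Q)) z (act g z)).
  { apply rp_cat with (w := b).
    - apply rp_rev; auto. eapply rp_skipn; eauto.
    - eapply rp_skipn; eauto.
    - intros a1 a2 L E1 E2. rewrite length_rev in L, E1. rewrite nth_rev_2 in E1 by auto.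
      rewrite nth_error_skipn in E1, E2. intro; subst a2.
      apply (Hj3 (j + 1)). lia. rewrite E1, E2. auto. }
  apply (HZ _ z (act g z) b Hz (Hinv z Hz) W). apply in_or_app. left.
  rewrite <- in_rev. apply (nth_error_In _ 0). rewrite nth_error_skipn. rewrite Nat.add_0_r. auto.
Qed.

End Ell.

Unset Implicit Arguments.

Section Core.
Variable G : Type.
Variables (mul : G -> G -> G) (inv : G -> G) (e : G).
Hypothesis Hgrp : is_group mul inv e.
Variable V : Type.
Variable adj : V -> V -> Prop.
Hypothesis Hsym : forall x y, adj x y -> adj y x.
Hypothesis Hirr : forall x, ~ adj x x.
Hypothesis Hconn : forall x y, exists p, wk adj p x y.
Hypothesis Hcyc : forall p x, wk adj p x x -> 2 <= length p -> ~ nbk p.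
Variable act : G -> V -> V.
Hypothesis Hact : is_action mul e act.
Hypothesis Haut : by_automorphisms adj act.
Hypothesis Hninv : without_inversions adj act.
Hypothesis Hmin : minimal_action adj act.
Variable k : nat.
Hypothesis Hacyl : k_acylindrical e adj act k.
Variable M : G -> Prop.
Hypothesis HM : is_subgroup mul inv e M.
Hypothesis Hnorm : normal_in_group mul inv M.

Let rpact := @rp_act G mul inv e Hgrp V adj act Hact Haut.
Let invl := @act_inv_l G mul inv e Hgrp V act Hact.
Let invr := @act_inv_r G mul inv e Hgrp V act Hact.
Let amul := @act_mul G mul e V act Hact.
Let uniq := @rp_unique V adj Hsym Hcyc.
Let rpex := @rp_exists V adj Hconn.

Lemma pullback Z d : convex adj Z -> (exists z, Z z) -> (forall g v, M g -> Z v -> Z (act g v)) ->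
  convex adj (fun v => Z (act d v)) /\ (exists z, Z (act d z)) /\
  (forall g v, M g -> Z (act d v) -> Z (act d (act g v))).
Proof.
  intros HZ [z Hz] HI. split; [|split].
  - intros P x y v Hx Hy HP Hv. apply (HZ _ _ _ _ Hx Hy (rpact d _ _ _ HP)). apply in_map; auto.
  - exists (act (inv d) z). rewrite invr. auto.
  - intros g v Hg Hv. 
    assert (E : act d (act g v) = act (mul (mul d g) (inv d)) (act d v)).
    { rewrite amul, invl, amul. auto. }
    rewrite E. apply HI; auto.
Qed.

Lemma exit_edge Z z0 v : Z z0 -> ~ Z v -> exists p q, adj p q /\ Z p /\ ~ Z q.
Proof.
  intros Hz Hv. destruct (rpex z0 v) as [P [[H1 [H2 H3]] _]].
  destruct (least_nat (fun i => exists b, nth_error P i = Some b /\ ~ Z b)) as [i [[b [Eb Nb]] Hl]].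
  { exists (length P - 1). eauto. }
  destruct i as [|i]. { rewrite H2 in Eb. inversion Eb; subst. contradiction. }
  destruct (nth_error P i) as [a|] eqn:Ea.
  2:{ apply nth_error_None in Ea. assert (S i < length P) by (apply nth_error_Some; congruence). lia. }
  exists a, b. split. apply (H1 i); auto. split; auto.
  apply NNPP. intros Na. specialize (Hl i (ex_intro _ a (conj Ea Na))). lia.
Qed.

Lemma elliptic_case m c Z z0 p q : M m -> m <> e -> act m c = c -> convex adj Z -> Z z0 ->
  (forall g v, M g -> Z v -> Z (act g v)) -> adj p q -> Z p -> ~ Z q -> False.
Proof.
  intros Hm Hme Hc HZ Hz0 HI Hpq Hp Hq.
  destruct (long_path Hgrp Hsym Hirr Hconn Hcyc Hact Haut Hninv Hmin p q Hpq (S (S k))) as [L0 [u [w [HL [Hq1 HLn]]]]].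
  assert (Huw : adj u w).
  { destruct HL as [[A _] _]. apply (A (length L0)).
    rewrite nth_error_app2 by lia. rewrite Nat.sub_diag. reflexivity.
    rewrite nth_error_app2 by lia. replace (S (length L0) - length L0) with 1 by lia. reflexivity. }
  destruct (covering Hgrp Hsym Hconn Hcyc Hact Haut Hmin u w Huw c) as [d Hd].
  destruct (pullback Z d HZ (ex_intro _ z0 Hz0) HI) as [C1 [C2 C3]].
  destruct C2 as [z1 Hz1].
  destruct (@midpoint G mul inv e Hgrp V adj Hsym Hconn act Hact Haut m c (fun v => Z (act d v)) z1 Hc C1 Hz1 (fun v Hv => C3 m v Hm Hv)) as [f [Hf HZf]].
  destruct (rpex c f) as [Pcf HPcf].
  pose proof (fix_short Hgrp Hsym Hcyc Hact Haut Hacyl Hme Hc Hf HPcf) as Hlen.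
  pose proof (rp_rev Hsym (rpact d _ _ _ HPcf)) as Hrev.
  destruct (classic (HT adj p q (act d f))) as [Hin|Hout].
  - destruct Hin as [r Hr]. apply Hq. apply (HZ _ _ _ q Hp HZf Hr). simpl; auto.
  - pose proof (@deep V adj Hsym Hconn Hcyc p q L0 u w _ _ _ HL Hq1 Hd Hout Hrev) as Hdeep.
    rewrite length_rev, length_map in Hdeep. lia.
Qed.

Section Hyp.
Variable m : G.
Hypothesis Hm : M m.
Hypothesis Hfree : forall v, act m v <> v.

Lemma hyp_point (v0 : V) : exists x0, forall Z, convex adj Z -> (exists z, Z z) ->
  (forall v, Z v -> Z (act m v)) -> (forall v, Z v -> Z (act (inv m) v)) -> Z x0.
Proof.
  destruct (least_nat (fun d => exists x P, rp adj P x (act m x) /\ length P = d)) as [n [[x0 [P [HP HPn]]] Hmn]].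
  { destruct (rpex v0 (act m v0)) as [P HP]. eauto. }
  exists x0.
  assert (HP0 : nth_error P 0 = Some x0) by apply HP.
  assert (HPl : nth_error P (n - 1) = Some (act m x0)) by (rewrite <- HPn; apply HP).
  assert (Hn2 : 2 <= n).
  { pose proof (wk_len (proj1 HP)). destruct (Nat.eq_dec n 1); [|lia].
    assert (n - 1 = 0) as E0 by lia. rewrite E0, HP0 in HPl. inversion HPl as [HH]. exfalso. apply (Hfree x0). auto. }
  assert (AJ : forall a1 b1, nth_error P (n - 2) = Some a1 -> nth_error P 1 = Some b1 -> a1 <> act m b1).
  { intros a1 b1 E1 E2 Eab. destruct (Nat.eq_dec n 2) as [En|En].
    - rewrite En in E1, HPl. change (2 - 2) with 0 in E1. change (2 - 1) with 1 in HPl. rewrite HP0 in E1. inversion E1; subst a1.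
      rewrite HPl in E2. inversion E2; subst b1.
      apply (@Hninv m x0 (act m x0)). destruct HP as [[A _] _]. apply (A 0); auto.
      split; auto.
    - pose proof (rp_firstn (n - 2) HP E1) as F1.
      assert (E2' : nth_error (firstn (S (n - 2)) P) 1 = Some b1).
      { rewrite nth_error_firstn. destruct (Nat.ltb_spec 1 (S (n - 2))); [auto|lia]. }
      pose proof (rp_skipn 1 F1 E2') as F2. rewrite Eab in F2.
      specialize (Hmn _ (ex_intro _ b1 (ex_intro _ _ (conj F2 eq_refl)))).
      rewrite length_skipn, length_firstn in Hmn. lia. }
  intros Z HZ [z0 Hz0] Hm1 Hm2.
  destruct (least_nat (fun D => exists i z R a, i <= n - 2 /\ nth_error P i = Some a /\ Z z /\ rp adj R a z /\ length R = D))
    as [D [[i [z [R [a [Hi [Ea [Hz [HR HRD]]]]]]]] HDmin]].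
  { destruct (rpex x0 z0) as [R HR]. exists (length R), 0, z0, R, x0. split; [lia|]. split; [auto|]. split; [auto|]. split; [auto|reflexivity]. }
  assert (Short : forall i' z' R' a', i' <= n - 2 -> nth_error P i' = Some a' -> Z z' -> rp adj R' a' z' -> length R' < D -> False).
  { intros i' z' R' a' H1 H2 H3 H4 H5.
    assert (D <= length R').
    { apply HDmin. exists i', z', R', a'. split; [auto|]. split; [auto|]. split; [auto|]. split; [auto|reflexivity]. }
    lia. }
  assert (HDpos : 1 <= D) by (rewrite <- HRD; apply (wk_len (proj1 HR))).
  assert (Tl : forall r1, nth_error R 1 = Some r1 -> rp adj (skipn 1 R) r1 z /\ length (skipn 1 R) < D).
  { intros r1 E. split. apply (rp_skipn 1 HR E). rewrite length_skipn. lia. }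
  assert (Hin : i < n) by lia.
  assert (HC : rp adj (firstn (S i) P ++ tl R) x0 z).
  { apply rp_cat with (w := a). apply (rp_firstn i HP Ea). auto.
    intros a1 b1 L E1 E2 E. subst b1. rewrite length_firstn in L, E1.
    replace (min (S i) (length P) - 2) with (i - 1) in E1 by lia.
    rewrite nth_error_firstn in E1. destruct (Nat.ltb_spec (i - 1) (S i)); [|discriminate].
    destruct (Tl a1 E2) as [T1 T2]. apply (Short (i - 1) z (skipn 1 R) a1); auto; lia. }
  set (C := firstn (S i) P ++ tl R) in *.
  pose proof (rpact m _ _ _ HC) as HmC.
  assert (HA2 : rp adj (skipn i P ++ tl (map (act m) C)) a (act m z)).
  { apply rp_cat with (w := act m x0). rewrite <- HPn in HPl. apply (rp_skipn i HP Ea). auto.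
    intros a1 b1 L E1 E2 E. subst a1. rewrite length_skipn in L, E1.
    rewrite nth_error_skipn in E1. replace (i + (length P - i - 2)) with (n - 2) in E1 by lia.
    rewrite nth_error_map in E2. destruct (nth_error C 1) as [c1|] eqn:Ec1; [|discriminate].
    simpl in E2. inversion E2; subst b1. unfold C in Ec1.
    destruct i as [|i'].
    - assert (L1 : length (firstn 1 P) = 1) by (rewrite length_firstn; lia).
      rewrite nth_error_app2 in Ec1 by lia. rewrite L1 in Ec1. simpl in Ec1.
      assert (ER1 : nth_error R 1 = Some c1) by (rewrite nth_error_S; auto).
      destruct (Tl c1 ER1) as [T1 T2]. pose proof (rpact m _ _ _ T1) as T3.
      apply (Short (n - 2) (act m z) _ _ (le_n _) E1 (Hm1 z Hz) T3).
      rewrite length_map. auto.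
    - rewrite nth_error_app1 in Ec1 by (rewrite length_firstn; lia).
      rewrite nth_error_firstn in Ec1. destruct (Nat.ltb_spec 1 (S (S i'))); [|lia].
      apply (AJ _ _ E1 Ec1). auto. }
  assert (HB : rp adj (rev R ++ tl (skipn i P ++ tl (map (act m) C))) z (act m z)).
  { apply rp_cat with (w := a). apply (rp_rev Hsym HR). auto.
    intros a1 b1 L E1 E2 E. subst b1. rewrite length_rev in L, E1. rewrite nth_rev_2 in E1 by auto.
    rewrite nth_error_app1 in E2 by (rewrite length_skipn; lia).
    rewrite nth_error_skipn in E2.
    destruct (Tl a1 E1) as [T1 T2].
    destruct (Nat.le_gt_cases (i + 1) (n - 2)).
    - apply (Short (i + 1) z _ a1 H E2 Hz T1 T2).
    - assert (i + 1 = n - 1) by lia. rewrite H0 in E2. rewrite HPl in E2. inversion E2; subst a1.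
      pose proof (rpact (inv m) _ _ _ T1) as T3. rewrite invl in T3.
      apply (Short 0 (act (inv m) z) _ x0 ltac:(lia) HP0 (Hm2 z Hz) T3). rewrite length_map; auto. }
  assert (Zmx0 : Z (act m x0)).
  { apply (HZ _ _ _ _ Hz (Hm1 z Hz) HB). apply in_or_app. right.
    apply (nth_error_In _ (n - 2 - i)). rewrite <- nth_error_S.
    rewrite nth_error_app1 by (rewrite length_skipn; lia). rewrite nth_error_skipn.
    rewrite <- HPl. f_equal. lia. }
  pose proof (Hm2 _ Zmx0) as H. rewrite invl in H. auto.
Qed.

End Hyp.

Lemma core Z : convex adj Z -> (exists z, Z z) -> (forall g v, M g -> Z v -> Z (act g v)) ->
  (exists m, M m /\ m <> e) -> forall v, Z v.
Proof.
  intros HZ [z0 Hz0] HI [m [Hm Hme]] v. apply NNPP. intros Hv.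
  destruct (exit_edge Z z0 v Hz0 Hv) as [p [q [Hpq [Hp Hq]]]].
  destruct (classic (exists c, act m c = c)) as [[c Hc]|Hfree].
  - eapply elliptic_case; eauto.
  - assert (Hf : forall v, act m v <> v) by (intros u Hu; apply Hfree; eauto).
    destruct (hyp_point m Hf z0) as [x0 Hx0].
    destruct (covering Hgrp Hsym Hconn Hcyc Hact Haut Hmin p q Hpq x0) as [d Hd].
    destruct (pullback Z d HZ (ex_intro _ z0 Hz0) HI) as [C1 [C2 C3]].
    assert (Hminv : M (inv m)) by (apply HM; auto).
    pose proof (Hx0 (fun v => Z (act d v)) C1 C2 (fun v Hv => C3 m v Hm Hv) (fun v Hv => C3 (inv m) v Hminv Hv)) as H.
    simpl in H. destruct Hd as [r Hr]. apply Hq. apply (HZ _ _ _ q Hp H Hr). simpl; auto.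
Qed.

End Core.

Lemma wcat (V : Type) (R : V -> V -> Prop) A B x w y :
  pthR R A -> nth_error A 0 = Some x -> nth_error A (length A - 1) = Some w ->
  pthR R B -> nth_error B 0 = Some w -> nth_error B (length B - 1) = Some y ->
  pthR R (A ++ tl B) /\ nth_error (A ++ tl B) 0 = Some x /\
  nth_error (A ++ tl B) (length (A ++ tl B) - 1) = Some y.
Proof.
  intros A1 A2 A3 B1 B2 B3.
  assert (NA : A <> []) by (destruct A; simpl in *; congruence).
  assert (EA : A = removelast A ++ [w]).
  { rewrite (app_removelast_last w NA) at 1. f_equal. rewrite (nth_last w NA) in A3. congruence. }
  assert (EB : B = w :: tl B) by (destruct B; simpl in *; congruence).
  rewrite EA. rewrite <- app_assoc. change ([w] ++ tl B) with (w :: tl B). split; [|split].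
  - apply pthR_join. rewrite <- EA; auto. rewrite <- EB; auto.
  - rewrite nth_join_l by lia. rewrite <- EA. auto.
  - rewrite nth_join_r by (rewrite length_app; simpl; lia). rewrite <- EB.
    rewrite <- B3. f_equal. rewrite length_app. simpl. lia.
Qed.

Section Final.
Variable G : Type.
Variables (mul : G -> G -> G) (inv : G -> G) (e : G).
Hypothesis Hgrp : is_group mul inv e.
Variable V : Type.
Variable adj : V -> V -> Prop.
Hypothesis Hsym : forall x y, adj x y -> adj y x.
Hypothesis Hirr : forall x, ~ adj x x.
Hypothesis Hconn : forall x y, exists p, wk adj p x y.
Hypothesis Hcyc : forall p x, wk adj p x x -> 2 <= length p -> ~ nbk p.
Variable act : G -> V -> V.
Hypothesis Hact : is_action mul e act.
Hypothesis Haut : by_automorphisms adj act.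
Hypothesis Hninv : without_inversions adj act.
Hypothesis Hmin : minimal_action adj act.
Variable k : nat.
Hypothesis Hacyl : k_acylindrical e adj act k.
Variables H M : G -> Prop.
Hypothesis HH : is_subgroup mul inv e H.
Hypothesis HM : is_subgroup mul inv e M.
Hypothesis HMH : forall m, M m -> H m.
Hypothesis Hnt : exists m, M m /\ m <> e.
Hypothesis Hnorm : normal_in_group mul inv M.
Variable Sg : list G.
Hypothesis HS : forall x, H x <-> generated_by mul inv e Sg x.
Variable v0 : V.
Variable Ws : list (list V).
Hypothesis HWs : forall s, In s Sg -> exists W, In W Ws /\ wk adj W v0 (act s v0).

Let rpact := @rp_act G mul inv e Hgrp V adj act Hact Haut.
Let invl := @act_inv_l G mul inv e Hgrp V act Hact.
Let invr := @act_inv_r G mul inv e Hgrp V act Hact.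
Let amul := @act_mul G mul e V act Hact.
Let ae := @act_e G mul e V act Hact.

Definition Vs := v0 :: concat Ws.
Definition Tp v := exists g a, H g /\ In a Vs /\ act g a = v.
Definition E x y := adj x y /\ exists g a b, H g /\ In a Vs /\ In b Vs /\ act g a = x /\ act g b = y.
Definition Ew x y := exists W, pthR E W /\ nth_error W 0 = Some x /\ nth_error W (length W - 1) = Some y.

Lemma H_e : H e. Proof. apply HH. Qed.
Lemma H_mul g h : H g -> H h -> H (mul g h). Proof. apply HH. Qed.
Lemma H_inv g : H g -> H (inv g). Proof. apply HH. Qed.

Lemma E_sym x y : E x y -> E y x.
Proof. intros [A [g [a [b [B1 [B2 [B3 [B4 B5]]]]]]]]. split; auto. exists g, b, a. auto. Qed.

Lemma E_act g x y : H g -> E x y -> E (act g x) (act g y).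
Proof.
  intros Hg [A [h [a [b [B1 [B2 [B3 [B4 B5]]]]]]]]. split. apply Haut; auto.
  exists (mul g h), a, b. split. apply H_mul; auto. split; auto. split; auto.
  rewrite !amul. subst. auto.
Qed.

Lemma Ew_refl x : Ew x x.
Proof. exists [x]. split. apply pthR_short; simpl; lia. split; reflexivity. Qed.

Lemma Ew_trans x y z : Ew x y -> Ew y z -> Ew x z.
Proof.
  intros [A [A1 [A2 A3]]] [B [B1 [B2 B3]]]. exists (A ++ tl B). eapply wcat; eauto.
Qed.

Lemma Ew_sym x y : Ew x y -> Ew y x.
Proof.
  intros [A [A1 [A2 A3]]]. exists (rev A).
  assert (1 <= length A) by (destruct A; simpl in *; [discriminate|lia]).
  split; [|split].
  - apply pthR_rev; auto. apply E_sym.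
  - rewrite nth_error_rev. destruct (Nat.ltb_spec 0 (length A)); [|lia]. rewrite <- A3. f_equal; lia.
  - rewrite nth_error_rev, length_rev. destruct (Nat.ltb_spec (length A - 1) (length A)); [|lia].
    rewrite <- A2. f_equal; lia.
Qed.

Lemma Ew_act g x y : H g -> Ew x y -> Ew (act g x) (act g y).
Proof.
  intros Hg [A [A1 [A2 A3]]]. exists (map (act g) A). split; [|split].
  - apply pthR_map with (R := E); auto. intros; apply E_act; auto.
  - rewrite nth_error_map, A2. reflexivity.
  - rewrite length_map, nth_error_map, A3. reflexivity.
Qed.

Lemma W_E W : In W Ws -> pthR adj W -> pthR E W.
Proof.
  intros HW HP i a b E1 E2. split. eapply HP; eauto.
  exists e, a, b. split. apply H_e. split; [|split; [|split]].
  - right. apply in_concat. exists W. split; auto. eapply nth_error_In; eauto.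
  - right. apply in_concat. exists W. split; auto. eapply nth_error_In; eauto.
  - apply ae.
  - apply ae.
Qed.

Hypothesis HWs2 : forall W, In W Ws -> pthR adj W /\ nth_error W 0 = Some v0.

Lemma Ew_orbit h : H h -> Ew v0 (act h v0).
Proof.
  intros Hh. apply HS in Hh.
  set (K := fun g => H g /\ Ew v0 (act g v0)).
  assert (HK : is_subgroup mul inv e K).
  { split; [|split].
    - split. apply H_e. rewrite ae. apply Ew_refl.
    - intros a b [Ha1 Ha2] [Hb1 Hb2]. split. apply H_mul; auto.
      rewrite amul. eapply Ew_trans. apply Ha2. apply Ew_act; auto.
    - intros a [Ha1 Ha2]. split. apply H_inv; auto.
      pose proof (Ew_act (inv a) _ _ (H_inv _ Ha1) Ha2) as X. rewrite invl in X. apply Ew_sym; auto. }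
  apply (Hh K HK). intros s Hs. split.
  - apply HS. intros K' _ HK'. apply HK'; auto.
  - destruct (HWs s Hs) as [W [HW [W1 [W2 W3]]]]. exists W. split; auto. apply W_E; auto.
Qed.

Lemma Vs_Ew a : In a Vs -> Ew v0 a.
Proof.
  intros [Ha|Ha]. { subst. apply Ew_refl. }
  apply in_concat in Ha. destruct Ha as [W [HW Ha]].
  destruct (HWs2 W HW) as [W1 W2]. apply In_nth_error in Ha. destruct Ha as [i Ei].
  exists (firstn (S i) W). split; [|split].
  - apply pthR_firstn. apply W_E; auto.
  - rewrite nth_error_firstn. destruct (Nat.ltb_spec 0 (S i)); [auto|lia].
  - rewrite nth_error_firstn, length_firstn.
    assert (i < length W) by (apply nth_error_Some; congruence).
    replace (min (S i) (length W) - 1) with i by lia.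
    destruct (Nat.ltb_spec i (S i)); [auto|lia].
Qed.

Lemma Tp_Ew v : Tp v -> Ew v0 v.
Proof.
  intros [g [a [Hg [Ha Ea]]]]. subst v. eapply Ew_trans. apply (Ew_orbit g Hg).
  apply Ew_act; auto. apply Vs_Ew; auto.
Qed.

Lemma E_Tp x y : E x y -> Tp x /\ Tp y.
Proof. intros [_ [g [a [b [B1 [B2 [B3 [B4 B5]]]]]]]]. split; exists g; eauto. Qed.

Lemma Tp_convex : convex adj Tp.
Proof.
  intros p x y v Hx Hy Hp Hv.
  destruct (Ew_trans _ _ _ (Ew_sym _ _ (Tp_Ew x Hx)) (Tp_Ew y Hy)) as [W [W1 [W2 W3]]].
  destruct (@rp_in_walk V adj Hsym Hcyc E W p x y (fun a b h => proj1 h) W1 W2 W3 Hp) as [I _].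
  apply I in Hv. apply In_nth_error in Hv. destruct Hv as [i Ei].
  destruct i as [|i]. { rewrite W2 in Ei. inversion Ei; subst; auto. }
  destruct (nth_error W i) as [a|] eqn:Ea.
  - exact (proj2 (E_Tp _ _ (W1 i a v Ea Ei))).
  - apply nth_error_None in Ea. assert (S i < length W) by (apply nth_error_Some; congruence). lia.
Qed.

Lemma Tp_all : forall v, Tp v.
Proof.
  apply (@core G mul inv e Hgrp V adj Hsym Hirr Hconn Hcyc act Hact Haut Hninv Hmin k Hacyl M HM Hnorm Tp Tp_convex).
  - exists v0, e, v0. split. apply H_e. split. left; auto. apply ae.
  - intros g v Hg [h [a [Hh [Ha Ea]]]]. exists (mul g h), a. split. apply H_mul; auto.
    split; auto. rewrite amul. congruence.
  - auto.
Qed.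

Lemma final_cocompact : cocompact_on H adj act.
Proof.
  split.
  - exists Vs. intros v. destruct (Tp_all v) as [g [a [Hg [Ha Ea]]]]. exists g, a. auto.
  - exists (list_prod Vs Vs). intros x y Hxy.
    destruct (Ew_trans _ _ _ (Ew_sym _ _ (Tp_Ew x (Tp_all x))) (Tp_Ew y (Tp_all y))) as [W [W1 [W2 W3]]].
    destruct (@rp_in_walk V adj Hsym Hcyc E W [x; y] x y (fun a b h => proj1 h) W1 W2 W3 (rp_two adj x y Hxy)) as [_ P].
    destruct (P 0 x y eq_refl eq_refl) as [_ [g [a [b [B1 [B2 [B3 [B4 B5]]]]]]]].
    exists g, a, b. split; auto. split. apply in_prod; auto. auto.
Qed.

End Final.

Lemma build_Ws (G V : Type) (adj : V -> V -> Prop) (act : G -> V -> V) (Sg : list G) (v0 : V) :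
  (forall x y, exists p, wk adj p x y) ->
  exists Ws : list (list V), (forall s, In s Sg -> exists W, In W Ws /\ wk adj W v0 (act s v0)) /\
    (forall W, In W Ws -> pthR adj W /\ nth_error W 0 = Some v0).
Proof.
  intros Hc. induction Sg as [|s Sg IH].
  - exists []. split; intros; contradiction.
  - destruct IH as [Ws [A B]]. destruct (Hc v0 (act s v0)) as [W HW].
    exists (W :: Ws). split.
    + intros s' [Hs|Hs]. subst. exists W. split; [left|]; auto.
      destruct (A s' Hs) as [W' [H1 H2]]. exists W'. split; [right|]; auto.
    + intros W' [HW'|HW']. subst. split; apply HW. apply B; auto.
Qed.

Theorem lemma5p1 (G : Type) (mul : G -> G -> G) (inv : G -> G) (e : G)
  (V : Type) (adj : V -> V -> Prop) (act : G -> V -> V) (k : nat)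
  (H M : G -> Prop) :
  is_group mul inv e ->
  is_tree adj ->
  is_action mul e act ->
  by_automorphisms adj act ->
  without_inversions adj act ->
  k_acylindrical e adj act k ->
  cocompact_on (fun _ => True) adj act ->
  minimal_action adj act ->
  is_subgroup mul inv e H ->
  finitely_generated mul inv e H ->
  is_subgroup mul inv e M ->
  (forall m, M m -> H m) ->
  (exists m, M m /\ m <> e) ->
  normal_in_group mul inv M ->
  cocompact_on H adj act.
Proof.
  intros Hgrp [Hsym [Hirr [Hconn0 Hcyc0]]] Hact Haut Hninv Hacyl _ Hmin HH [Sg HS] HM HMH Hnt Hnorm.
  assert (Hconn : forall x y, exists p, wk adj p x y).
  { intros x y. destruct (Hconn0 x y) as [p Hp]. exists p. apply wk_pft; auto. }
  assert (Hcyc : forall p x, wk adj p x x -> 2 <= length p -> ~ nbk p).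
  { intros p x H1 H2 H3. apply (Hcyc0 p x). apply wk_pft; auto. auto. apply no_backtrack_iff; auto. }
  destruct (classic (exists v : V, True)) as [[v0 _]|Hno].
  - destruct (build_Ws G V adj act Sg v0 Hconn) as [Ws [A B]].
    exact (@final_cocompact G mul inv e Hgrp V adj Hsym Hirr Hconn Hcyc act Hact Haut Hninv Hmin k Hacyl
             H M HH HM HMH Hnt Hnorm Sg HS v0 Ws A B).
  - split.
    + exists []. intros v. exfalso. apply Hno. exists v. auto.
    + exists []. intros x. exfalso. apply Hno. exists x. auto.
Qed.
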